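(* Let $C$ be a parity complex in which every cell $(M',P')$ has $M'$ and $P'$ receptive. Let $m,n\in\mathbb N$, let $(M,P)$ be an $n$-cell, and let $X\subseteq C_{n+1}$ be a well-formed set with exactly $m$ elements such that $X^\pm\subseteq M_n$. Put $Y=(M_n\cup X^-)\setminus X^+$. Then: (B) $(M^{n-1}\cup Y,\ P^{n-1}\cup Y)$ is a cell and $X^-\cap M_n=\emptyset$; (C) $(M^{n-1}\cup Y\cup X,\ P\cup X)$ is a cell.
   Context: A parity complex consists of a set $C=\bigsqcup_{n\ge 0}C_n$ graded by dimension, together with, for each $n\ge 0$ and each $x\in C_{n+1}$, two disjoint, non-empty, finite subsets $x^-,x^+\subseteq C_n$ (for $x\in C_0$ put $x^-=x^+=\emptyset$), subject to Axioms 1, 2, 3A, 3B below. Notation: for $S\subseteq C$, $S^-=\bigcup_{w\in S}w^-$, $S^+=\bigcup_{w\in S}w^+$, $S^\mp=S^-\setminus S^+$, $S^\pm=S^+\setminus S^-$; $x^{-+}=(x^-)^+$, etc.; $S_n=S\cap C_n$ and $S^n=\bigcup_{k=0}^n S_k$ (the $n$-skeleton; $S^{-1}=\emptyset$); $S$ is $n$-dimensional when $S=S^n$. For $S,T\subseteq C$ write $S\perp T$ when $S^-\cap T^-=\emptyset$ and $S^+\cap T^+=\emptyset$; $x\perp y$ means $\{x\}\perp\{y\}$. A set $S$ is well-formed when $S_0$ has at most one element and for every $n>0$ and all distinct $x,y\in S_n$, $x\perp y$. Write $x<y$ when $x^+\cap y^-\neq\emptyset$, and let $\lhd$ be the reflexive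 transitive closure of $<$. Axioms: (1) for all $x$, $x^{++}\cup x^{--}=x^{-+}\cup x^{+-}$; (2) for all $x$, $x^-$ and $x^+$ are well-formed; (3A) $x\lhd y$ and $y\lhd x$ imply $x=y$; (3B) if $x\lhd y$ then there is no $z$ with $x\in z^+$ and $y\in z^-$, and no $z$ with $y\in z^+$ and $x\in z^-$. For $S,M,P\subseteq C$, $S$ moves $M$ to $P$ when $M=(P\cup S^-)\setminus S^+$ and $P=(M\cup S^+)\setminus S^-$. A cell is a pair $(M,P)$ of non-empty, well-formed, finite subsets of $C$ such that $M$ moves $M$ to $P$ and $P$ moves $M$ to $P$; it is an $n$-cell when $M\cup P$ is $n$-dimensional. A set $S\subseteq C$ is receptive when for all $x\in C$: if $x^{-+}\cap x^{++}\subseteq S$ and $S\cap x^{--}=\emptyset$ then $S\cap x^{+-}=\emptyset$; and if $x^{+-}\cap x^{--}\subseteq S$ and $S\cap x^{++}=\emptyset$ then $S\cap x^{-+}=\emptyset$. *)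

(* Defs.v *)
From Stdlib Require Import List Relations.

Set Implicit Arguments.

Section Sets.
Variable T : Type.
Definition subset (S U : T -> Prop) : Prop := forall x, S x -> U x.
Definition seteq (S U : T -> Prop) : Prop := forall x, S x <-> U x.
Definition setU (S U : T -> Prop) : T -> Prop := fun x => S x \/ U x.
Definition setI (S U : T -> Prop) : T -> Prop := fun x => S x /\ U x.
Definition setD (S U : T -> Prop) : T -> Prop := fun x => S x /\ ~ U x.
Definition set1 (a : T) : T -> Prop := fun x => x = a.
Definition finite (S : T -> Prop) : Prop :=
  exists l : list T, forall x, S x -> In x l.
Definition nonempty (S : T -> Prop) : Prop := exists x, S x.
Definition has_card (S : T -> Prop) (m : nat) : Prop :=
  exists l : list T, NoDup l /\ length l = m /\ forall x, S x <-> In x l.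
End Sets.

Record PreComplex := {
  carrier :> Type;
  dim : carrier -> nat;
  minus : carrier -> carrier -> Prop;   (* minus x y  <->  y \in x^- *)
  plus : carrier -> carrier -> Prop     (* plus x y   <->  y \in x^+ *)
}.
Arguments dim {p} _.
Arguments minus {p} _ _.
Arguments plus {p} _ _.

Section Ops.
Context {C : PreComplex}.
Implicit Types S M P X : C -> Prop.

Definition Sminus S : C -> Prop := fun y => exists w, S w /\ minus w y.
Definition Splus S : C -> Prop := fun y => exists w, S w /\ plus w y.
Definition Smp S : C -> Prop := setD (Sminus S) (Splus S).
Definition Spm S : C -> Prop := setD (Splus S) (Sminus S).
Definition layer S (n : nat) : C -> Prop := fun y => S y /\ dim y = n.
Definition skel S (n : nat) : C -> Prop := fun y => S y /\ dim y <= n.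
(* S^{n-1} for n : nat, i.e. cells of dimension < n (empty when n = 0) *)
Definition skel_pred S (n : nat) : C -> Prop := fun y => S y /\ dim y < n.
Definition ndimensional S (n : nat) : Prop := forall y, S y -> dim y <= n.

Definition perp S U : Prop :=
  (forall y, ~ (Sminus S y /\ Sminus U y)) /\
  (forall y, ~ (Splus S y /\ Splus U y)).

Definition well_formed S : Prop :=
  (forall x y, S x -> S y -> dim x = 0 -> dim y = 0 -> x = y) /\
  (forall n x y, 0 < n -> S x -> S y -> dim x = n -> dim y = n -> x <> y ->
     perp (set1 x) (set1 y)).

Definition ltc (x y : C) : Prop := exists z, plus x z /\ minus y z.
Definition lhd : C -> C -> Prop := clos_refl_trans C ltc.

Definition xm (x : C) : C -> Prop := minus x.
Definition xp (x : C) : C -> Prop := plus x.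

Definition parity_axioms : Prop :=
  (forall x y : C, minus x y -> dim x = S (dim y)) /\
  (forall x y : C, plus x y -> dim x = S (dim y)) /\
  (forall x y : C, ~ (minus x y /\ plus x y)) /\
  (forall x, 0 < dim x -> nonempty (xm x) /\ nonempty (xp x)) /\
  (forall x, finite (xm x) /\ finite (xp x)) /\
  (forall x, seteq (setU (Splus (xp x)) (Sminus (xm x)))
                   (setU (Splus (xm x)) (Sminus (xp x)))) /\
  (forall x, well_formed (xm x) /\ well_formed (xp x)) /\
  (forall x y, lhd x y -> lhd y x -> x = y) /\
  (forall x y, lhd x y ->
     (~ exists z, plus z x /\ minus z y) /\
     (~ exists z, plus z y /\ minus z x)).

Definition moves S M P : Prop :=
  seteq M (setD (setU P (Sminus S)) (Splus S)) /\
  seteq P (setD (setU M (Splus S)) (Sminus S)).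

Definition cell M P : Prop :=
  nonempty M /\ nonempty P /\ well_formed M /\ well_formed P /\
  finite M /\ finite P /\ moves M M P /\ moves P M P.

Definition ncell (n : nat) M P : Prop := cell M P /\ ndimensional (setU M P) n.

Definition receptive S : Prop :=
  forall x,
    (subset (setI (Splus (xm x)) (Splus (xp x))) S ->
       (forall y, ~ (S y /\ Sminus (xm x) y)) ->
       forall y, ~ (S y /\ Sminus (xp x) y)) /\
    (subset (setI (Sminus (xp x)) (Sminus (xm x))) S ->
       (forall y, ~ (S y /\ Splus (xp x) y)) ->
       forall y, ~ (S y /\ Splus (xm x) y)).
End Ops.

Record ParityComplex := {
  pc :> PreComplex;
  pc_axioms : @parity_axioms pc
}.

(* Main.v *)
Require Import Defs.
From Stdlib Require Import List Relations Lia Classical ClassicalEpsilon Arith.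
Import ListNotations.

Section PC.
Variable C : ParityComplex.

Definition eqd (a b : C) : {a = b} + {a <> b} := excluded_middle_informative (a = b).

Lemma axs : @parity_axioms C.
Proof. exact (pc_axioms C). Qed.

Lemma gm : forall x y : C, minus x y -> dim x = S (dim y).
Proof. destruct axs as [H _]; exact H. Qed.
Lemma gp : forall x y : C, plus x y -> dim x = S (dim y).
Proof. destruct axs as [_ [H _]]; exact H. Qed.
Lemma dj : forall x y : C, minus x y -> plus x y -> False.
Proof. destruct axs as [_ [_ [H _]]]; intros x y h1 h2; exact (H x y (conj h1 h2)). Qed.
Lemma nem : forall x : C, 0 < dim x -> exists y, minus x y.
Proof. destruct axs as [_ [_ [_ [H _]]]]; intros x h; apply (H x h). Qed.
Lemma nep : forall x : C, 0 < dim x -> exists y, plus x y.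
Proof. destruct axs as [_ [_ [_ [H _]]]]; intros x h; apply (H x h). Qed.
Lemma finm : forall x : C, finite (xm x).
Proof. destruct axs as [_ [_ [_ [_ [H _]]]]]; intros x; apply (H x). Qed.
Lemma finp : forall x : C, finite (xp x).
Proof. destruct axs as [_ [_ [_ [_ [H _]]]]]; intros x; apply (H x). Qed.
Lemma ax1 : forall x z : C, (Splus (xp x) z \/ Sminus (xm x) z) <-> (Splus (xm x) z \/ Sminus (xp x) z).
Proof. destruct axs as [_ [_ [_ [_ [_ [H _]]]]]]; intros x z; apply (H x z). Qed.
Lemma wfm : forall x : C, well_formed (xm x).
Proof. destruct axs as [_ [_ [_ [_ [_ [_ [H _]]]]]]]; intros x; apply (H x). Qed.
Lemma wfp : forall x : C, well_formed (xp x).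
Proof. destruct axs as [_ [_ [_ [_ [_ [_ [H _]]]]]]]; intros x; apply (H x). Qed.
Lemma a3A : forall x y : C, lhd x y -> lhd y x -> x = y.
Proof. destruct axs as [_ [_ [_ [_ [_ [_ [_ [H _]]]]]]]]; exact H. Qed.
Lemma a3B1 : forall x y z : C, lhd x y -> plus z x -> minus z y -> False.
Proof. destruct axs as [_ [_ [_ [_ [_ [_ [_ [_ H]]]]]]]]; intros x y z h h1 h2.
  destruct (H x y h) as [H1 _]; apply H1; eauto. Qed.
Lemma a3B2 : forall x y z : C, lhd x y -> plus z y -> minus z x -> False.
Proof. destruct axs as [_ [_ [_ [_ [_ [_ [_ [_ H]]]]]]]]; intros x y z h h1 h2.
  destruct (H x y h) as [_ H1]; apply H1; eauto. Qed.

Lemma lhd_refl : forall x : C, lhd x x.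
Proof. intros; apply rt_refl. Qed.
Lemma lhd_trans : forall x y z : C, lhd x y -> lhd y z -> lhd x z.
Proof. intros; eapply rt_trans; eauto. Qed.
Lemma lhd_lt : forall x y z : C, plus x z -> minus y z -> lhd x y.
Proof. intros; apply rt_step; exists z; auto. Qed.
Lemma ltc_lhd : forall x y : C, ltc x y -> lhd x y.
Proof. intros; apply rt_step; auto. Qed.

Lemma finite_exact : forall (V : C -> Prop) l, (forall e, V e -> In e l) ->
  exists l', forall e, V e <-> In e l'.
Proof.
  intros V l; revert V; induction l as [|a l IH]; intros V H.
  - exists []; intros e; split; [apply H|intros []].
  - destruct (IH (fun e => V e /\ e <> a)) as [l' Hl'].
    { intros e [h1 h2]; destruct (H e h1); [congruence|auto]. }
    destruct (classic (V a)) as [Ha|Ha].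
    + exists (a :: l'); intros e; split.
      * intros h; destruct (eqd e a); [left; congruence| right; apply Hl'; auto].
      * intros [h|h]; [subst; auto| apply Hl' in h; tauto].
    + exists l'; intros e; split.
      * intros h; apply Hl'; split; auto; intro; subst; auto.
      * intros h; apply Hl' in h; tauto.
Qed.

Lemma finite_sub : forall (V W : C -> Prop), finite W -> (forall e, V e -> W e) -> finite V.
Proof. intros V W [l Hl] H; exists l; auto. Qed.

Lemma finite_U : forall (V W : C -> Prop), finite V -> finite W -> finite (setU V W).
Proof. intros V W [l1 H1] [l2 H2]; exists (l1 ++ l2); intros x [h|h]; apply in_or_app; auto. Qed.

Lemma min_elt : forall (R : C -> C -> Prop),
  (forall x y z, R x y -> R y z -> R x z) -> (forall x y, R x y -> R y x -> x = y) ->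
  forall l (S : C -> Prop), (forall e, S e -> In e l) -> (exists e, S e) ->
  exists m, S m /\ forall e, S e -> R e m -> e = m.
Proof.
  intros R Rt Ra l; induction l as [|a l IH]; intros S Hs [e0 He0].
  - destruct (Hs e0 He0).
  - destruct (classic (exists e, S e /\ e <> a)) as [Hex|Hnex].
    + destruct (IH (fun e => S e /\ e <> a)) as [m [[Hm1 Hm2] Hm]].
      { intros e [h1 h2]; destruct (Hs e h1); [congruence|auto]. }
      { exact Hex. }
      destruct (classic (S a /\ R a m)) as [[Sa Ram]|Hn].
      * exists a; split; auto; intros e Se Rea.
        destruct (eqd e a); auto.
        assert (e = m) by (apply Hm; [split; auto| eapply Rt; eauto]).
        subst e. exfalso; apply Hm2; apply Ra; auto.
      * exists m; split; auto; intros e Se Rem.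
        destruct (eqd e a); [subst; exfalso; apply Hn; auto|].
        apply Hm; auto.
    + exists e0; split; auto; intros e Se _.
      destruct (eqd e a); destruct (eqd e0 a); subst; auto;
      exfalso; apply Hnex; eauto.
Qed.

Lemma lhd_min : forall l (S : C -> Prop), (forall e, S e -> In e l) -> (exists e, S e) ->
  exists m, S m /\ forall e, S e -> lhd e m -> e = m.
Proof. apply min_elt; [apply lhd_trans | apply a3A]. Qed.
Lemma lhd_max : forall l (S : C -> Prop), (forall e, S e -> In e l) -> (exists e, S e) ->
  exists m, S m /\ forall e, S e -> lhd m e -> e = m.
Proof. apply (min_elt (fun a b => lhd b a)).
  - intros; eapply lhd_trans; eauto.
  - intros; apply a3A; auto. Qed.

Lemma Sminus_ext : forall (S1 S2 : C -> Prop) z,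
  (forall w, dim w = S (dim z) -> (S1 w <-> S2 w)) -> (Sminus S1 z <-> Sminus S2 z).
Proof.
  intros S1 S2 z H; split; intros [w [h1 h2]]; exists w; split; auto;
  apply (H w (gm _ _ h2)); auto.
Qed.
Lemma Splus_ext : forall (S1 S2 : C -> Prop) z,
  (forall w, dim w = S (dim z) -> (S1 w <-> S2 w)) -> (Splus S1 z <-> Splus S2 z).
Proof.
  intros S1 S2 z H; split; intros [w [h1 h2]]; exists w; split; auto;
  apply (H w (gp _ _ h2)); auto.
Qed.

Lemma wf_ext : forall S1 S2 : C -> Prop, seteq S1 S2 -> well_formed S1 -> well_formed S2.
Proof.
  intros S1 S2 H [h1 h2]; split.
  - intros x y hx hy; apply h1; apply H; auto.
  - intros n x y hn hx hy; apply h2; auto; apply H; auto.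
Qed.

Lemma wf_sub : forall S1 S2 : C -> Prop, (forall e, S1 e -> S2 e) -> well_formed S2 -> well_formed S1.
Proof.
  intros S1 S2 H [h1 h2]; split; eauto.
Qed.

Lemma cell_ext : forall K L K' L' : C -> Prop, seteq K K' -> seteq L L' -> cell K L -> cell K' L'.
Proof.
  intros K L K' L' HK HL [[k0 hk0] [[l0 hl0] [wK [wL [fK [fL [[m1 m2] [p1 p2]]]]]]]].
  assert (EKm : forall z, Sminus K z <-> Sminus K' z) by (intro z; apply Sminus_ext; intros; apply HK).
  assert (EKp : forall z, Splus K z <-> Splus K' z) by (intro z; apply Splus_ext; intros; apply HK).
  assert (ELm : forall z, Sminus L z <-> Sminus L' z) by (intro z; apply Sminus_ext; intros; apply HL).
  assert (ELp : forall z, Splus L z <-> Splus L' z) by (intro z; apply Splus_ext; intros; apply HL).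
  unfold cell, moves.
  split; [exists k0; apply HK; auto|].
  split; [exists l0; apply HL; auto|].
  split; [apply (wf_ext _ _ HK); auto|].
  split; [apply (wf_ext _ _ HL); auto|].
  split; [destruct fK as [l h]; exists l; intros; apply h, HK; auto|].
  split; [destruct fL as [l h]; exists l; intros; apply h, HL; auto|].
  split; split; intros z; unfold setD, setU in *;
    specialize (m1 z); specialize (m2 z); specialize (p1 z); specialize (p2 z);
    specialize (HK z); specialize (HL z); specialize (EKm z); specialize (EKp z);
    specialize (ELm z); specialize (ELp z); tauto.
Qed.

Lemma K_lt : forall (M D : C -> Prop) j z, (forall y, D y -> dim y = j) -> dim z < j ->
  (setU (skel_pred M j) D z <-> M z).
Proof. intros M D j z HD h; unfold setU, skel_pred; split; [intros [[]|h']; auto; apply HD in h'; lia| auto]. Qed.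
Lemma K_eq : forall (M D : C -> Prop) j z, dim z = j ->
  (setU (skel_pred M j) D z <-> D z).
Proof. intros M D j z h; unfold setU, skel_pred; split; [intros [[]|h']; auto; lia| auto]. Qed.
Lemma K_gt : forall (M D : C -> Prop) j z, (forall y, D y -> dim y = j) -> dim z > j ->
  ~ setU (skel_pred M j) D z.
Proof. intros M D j z HD h; unfold setU, skel_pred; intros [[]|h']; try lia; apply HD in h'; lia. Qed.

Lemma GL : forall (M P D : C -> Prop) j, cell M P -> (forall y, D y -> dim y = j) ->
  nonempty D -> well_formed D -> finite D ->
  (forall z, S (dim z) = j -> (M z <-> (P z \/ Sminus D z) /\ ~ Splus D z)) ->
  (forall z, S (dim z) = j -> (P z <-> (M z \/ Splus D z) /\ ~ Sminus D z)) ->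
  cell (setU (skel_pred M j) D) (setU (skel_pred P j) D).
Proof.
  intros M P D j [_ [_ [wM [wP [fM [fP [[m1 m2] [p1 p2]]]]]]]] HD neD wD fD H1 H2.
  assert (Hwf : forall Q, well_formed Q -> well_formed (setU (skel_pred Q j) D)).
  { intros Q [q1 q2]; destruct wD as [d1 d2]; split.
    - intros x y [[hx hx']|hx] [[hy hy']|hy] e1 e2; auto.
      + apply HD in hy; lia.
      + apply HD in hx; lia.
    - intros n x y hn [[hx hx']|hx] [[hy hy']|hy] e1 e2 ne; eauto.
      + apply HD in hy; lia.
      + apply HD in hx; lia. }
  unfold cell, moves.
  split; [destruct neD as [y hy]; exists y; right; auto|].
  split; [destruct neD as [y hy]; exists y; right; auto|].
  split; [apply Hwf; auto|].
  split; [apply Hwf; auto|].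
  split; [apply finite_U; auto; apply (finite_sub _ _ fM); intros e []; auto|].
  split; [apply finite_U; auto; apply (finite_sub _ _ fP); intros e []; auto|].
  set (K := setU (skel_pred M j) D). set (L := setU (skel_pred P j) D).
  assert (G : forall z,
    (K z <-> (L z \/ Sminus K z) /\ ~ Splus K z) /\ (L z <-> (K z \/ Splus K z) /\ ~ Sminus K z) /\
    (K z <-> (L z \/ Sminus L z) /\ ~ Splus L z) /\ (L z <-> (K z \/ Splus L z) /\ ~ Sminus L z)).
  { intros z.
    destruct (lt_eq_lt_dec (S (dim z)) j) as [[h|h]|h].
    - assert (a1 : K z <-> M z) by (apply K_lt; auto; lia).
      assert (a2 : L z <-> P z) by (apply K_lt; auto; lia).
      assert (a3 : Sminus K z <-> Sminus M z) by (apply Sminus_ext; intros w hw; apply K_lt; auto; lia).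
      assert (a4 : Splus K z <-> Splus M z) by (apply Splus_ext; intros w hw; apply K_lt; auto; lia).
      assert (a5 : Sminus L z <-> Sminus P z) by (apply Sminus_ext; intros w hw; apply K_lt; auto; lia).
      assert (a6 : Splus L z <-> Splus P z) by (apply Splus_ext; intros w hw; apply K_lt; auto; lia).
      specialize (m1 z); specialize (m2 z); specialize (p1 z); specialize (p2 z); unfold setD, setU in *; tauto.
    - assert (a1 : K z <-> M z) by (apply K_lt; auto; lia).
      assert (a2 : L z <-> P z) by (apply K_lt; auto; lia).
      assert (a3 : Sminus K z <-> Sminus D z) by (apply Sminus_ext; intros w hw; apply K_eq; lia).
      assert (a4 : Splus K z <-> Splus D z) by (apply Splus_ext; intros w hw; apply K_eq; lia).
      assert (a5 : Sminus L z <-> Sminus D z) by (apply Sminus_ext; intros w hw; apply K_eq; lia).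
      assert (a6 : Splus L z <-> Splus D z) by (apply Splus_ext; intros w hw; apply K_eq; lia).
      specialize (H1 z h); specialize (H2 z h); tauto.
    - assert (a3 : ~ Sminus K z) by (intros [w [hw hw']]; apply gm in hw'; apply (K_gt _ _ _ _ HD) in hw; lia).
      assert (a4 : ~ Splus K z) by (intros [w [hw hw']]; apply gp in hw'; apply (K_gt _ _ _ _ HD) in hw; lia).
      assert (a5 : ~ Sminus L z) by (intros [w [hw hw']]; apply gm in hw'; apply (K_gt _ _ _ _ HD) in hw; lia).
      assert (a6 : ~ Splus L z) by (intros [w [hw hw']]; apply gp in hw'; apply (K_gt _ _ _ _ HD) in hw; lia).
      destruct (Nat.eq_dec (dim z) j) as [e|e].
      + assert (a1 : K z <-> D z) by (apply K_eq; auto).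
        assert (a2 : L z <-> D z) by (apply K_eq; auto).
        tauto.
      + assert (a1 : ~ K z) by (apply K_gt; auto; lia).
        assert (a2 : ~ L z) by (apply K_gt; auto; lia).
        tauto. }
  split; split; intro z; unfold setD, setU; apply G.
Qed.


Lemma wf_pp : forall (S0 : C -> Prop) u v z, well_formed S0 -> S0 u -> S0 v -> dim u = dim v -> 0 < dim u ->
  u <> v -> plus u z -> plus v z -> False.
Proof.
  intros S0 u v z [_ h] hu hv e p ne pu pv.
  destruct (h (dim u) u v p hu hv eq_refl (eq_sym e) ne) as [_ h2].
  apply (h2 z); split; [exists u|exists v]; unfold set1; auto.
Qed.
Lemma wf_mm : forall (S0 : C -> Prop) u v z, well_formed S0 -> S0 u -> S0 v -> dim u = dim v -> 0 < dim u ->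
  u <> v -> minus u z -> minus v z -> False.
Proof.
  intros S0 u v z [_ h] hu hv e p ne pu pv.
  destruct (h (dim u) u v p hu hv eq_refl (eq_sym e) ne) as [h2 _].
  apply (h2 z); split; [exists u|exists v]; unfold set1; auto.
Qed.

Definition Ydef (M : C -> Prop) n (x : C) := setD (setU (layer M n) (xm x)) (xp x).
Definition Sstmt n := forall (M P : C -> Prop) (x : C), ncell n M P -> dim x = S n ->
  subset (xp x) (layer M n) ->
  (forall y, ~ (xm x y /\ layer M n y)) /\
  cell (setU (skel_pred M n) (Ydef M n x)) (setU (skel_pred P n) (Ydef M n x)).
Definition Nset (P : C -> Prop) (V : C -> Prop) k := setD (setU (layer P k) (Sminus V)) (Splus V).

Section CellFacts.
Variables (M P : C -> Prop) (k : nat).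
Hypothesis HMP : ncell (S k) M P.

Lemma cf_cell : cell M P.
Proof. apply HMP. Qed.
Lemma cf_wfA : well_formed (layer M (S k)).
Proof. destruct HMP as [[_ [_ [w _]]] _]. apply (wf_sub _ _ (fun e h => proj1 h) w). Qed.
Lemma cf_finA : finite (layer M (S k)).
Proof. destruct HMP as [[_ [_ [_ [_ [f _]]]]] _]. apply (finite_sub _ _ f); intros e []; auto. Qed.
Lemma cf_E1 : forall z, dim z = k ->
  (layer M k z <-> (layer P k z \/ Sminus (layer M (S k)) z) /\ ~ Splus (layer M (S k)) z).
Proof.
  destruct HMP as [[_ [_ [_ [_ [_ [_ [[m1 m2] _]]]]]]] _]; intros z hz.
  assert (a : Sminus M z <-> Sminus (layer M (S k)) z)
    by (apply Sminus_ext; intros w hw; unfold layer; split; [intros; split; auto; lia| tauto]).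
  assert (b : Splus M z <-> Splus (layer M (S k)) z)
    by (apply Splus_ext; intros w hw; unfold layer; split; [intros; split; auto; lia| tauto]).
  specialize (m1 z); unfold setD, setU, layer in *; split; [intros [h1 h2]|intros [h1 h2]]; tauto.
Qed.
Lemma cf_E2 : forall z, dim z = k ->
  (layer P k z <-> (layer M k z \/ Splus (layer M (S k)) z) /\ ~ Sminus (layer M (S k)) z).
Proof.
  destruct HMP as [[_ [_ [_ [_ [_ [_ [[m1 m2] _]]]]]]] _]; intros z hz.
  assert (a : Sminus M z <-> Sminus (layer M (S k)) z)
    by (apply Sminus_ext; intros w hw; unfold layer; split; [intros; split; auto; lia| tauto]).
  assert (b : Splus M z <-> Splus (layer M (S k)) z)
    by (apply Splus_ext; intros w hw; unfold layer; split; [intros; split; auto; lia| tauto]).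
  specialize (m2 z); unfold setD, setU, layer in *; split; [intros [h1 h2]|intros [h1 h2]]; tauto.
Qed.
Lemma cf_top : forall z, dim z = S k -> (M z <-> P z).
Proof.
  destruct HMP as [[_ [_ [_ [_ [_ [_ [[m1 m2] _]]]]]]] nd]; intros z hz.
  specialize (m1 z); unfold setD, setU in m1.
  assert (~ Sminus M z).
  { intros [w [hw hw']]. apply gm in hw'. assert (dim w <= S k) by (apply nd; left; auto). lia. }
  assert (~ Splus M z).
  { intros [w [hw hw']]. apply gp in hw'. assert (dim w <= S k) by (apply nd; left; auto). lia. }
  tauto.
Qed.
Lemma cf_base : cell (setU (skel_pred M k) (layer P k)) (setU (skel_pred P k) (layer P k)) \/ ~ nonempty (layer P k).
Proof.
  destruct (classic (nonempty (layer P k))) as [ne|ne]; [left|right; auto].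
  destruct HMP as [[c1 [c2 [wM [wP [fM [fP [[m1 m2] [p1 p2]]]]]]]] nd].
  apply GL.
  - repeat (split; auto).
  - intros y []; auto.
  - auto.
  - apply (wf_sub _ _ (fun e h => proj1 h) wP).
  - apply (finite_sub _ _ fP); intros e []; auto.
  - intros z hz.
    assert (a : Sminus P z <-> Sminus (layer P k) z)
      by (apply Sminus_ext; intros w hw; unfold layer; split; [intros; split; auto; lia| tauto]).
    assert (b : Splus P z <-> Splus (layer P k) z)
      by (apply Splus_ext; intros w hw; unfold layer; split; [intros; split; auto; lia| tauto]).
    specialize (p1 z); unfold setD, setU in *; tauto.
  - intros z hz.
    assert (a : Sminus P z <-> Sminus (layer P k) z)
      by (apply Sminus_ext; intros w hw; unfold layer; split; [intros; split; auto; lia| tauto]).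
    assert (b : Splus P z <-> Splus (layer P k) z)
      by (apply Splus_ext; intros w hw; unfold layer; split; [intros; split; auto; lia| tauto]).
    specialize (p2 z); unfold setD, setU in *; tauto.
Qed.
End CellFacts.

Lemma CC : forall k, Sstmt k -> forall len (l : list C) (M P V : C -> Prop), length l <= len ->
  (forall e, V e <-> In e l) -> ncell (S k) M P -> nonempty (layer P k) ->
  (forall e, V e -> layer M (S k) e) ->
  (forall e e', V e -> layer M (S k) e' -> ltc e e' -> V e') ->
  cell (setU (skel_pred M k) (Nset P V k)) (setU (skel_pred P k) (Nset P V k)).
Proof.
  intros k HS len; induction len as [|len IH]; intros l M P V hl HV HMP neP HVA Hup.
  -
    destruct (cf_base M P k HMP) as [hc|hc]; [|contradiction].
    assert (Ve : forall e, ~ V e) by (intros e h; apply HV in h; destruct l; simpl in *; auto; lia).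
    revert hc; apply cell_ext; intro z; unfold Nset, setU, setD;
      assert (~ Sminus V z) by (intros [w [h _]]; apply (Ve w); auto);
      assert (~ Splus V z) by (intros [w [h _]]; apply (Ve w); auto); tauto.
  - destruct (classic (exists e, V e)) as [ne|ne].
    2:{ destruct (cf_base M P k HMP) as [hc|hc]; [|contradiction].
        revert hc; apply cell_ext; intro z; unfold Nset, setU, setD;
        assert (~ Sminus V z) by (intros [w [h _]]; apply ne; eauto);
        assert (~ Splus V z) by (intros [w [h _]]; apply ne; eauto); tauto. }
    destruct (lhd_min l V (fun e h => proj1 (HV e) h) ne) as [w [Vw wmin]].
    set (V' := fun e => V e /\ e <> w).
    assert (HV' : forall e, V' e <-> In e (remove eqd w l)).
    { intros e; unfold V'; split.
      - intros [h1 h2]; apply in_in_remove; auto; apply HV; auto.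
      - intros h; apply in_remove in h; destruct h; split; auto; apply HV; auto. }
    assert (hl' : length (remove eqd w l) <= len).
    { assert (length (remove eqd w l) < length l) by (apply remove_length_lt, HV, Vw). lia. }
    assert (Aw := HVA w Vw).
    assert (Hup' : forall e e', V' e -> layer M (S k) e' -> ltc e e' -> V' e').
    { intros e e' [h1 h2] h3 h4; split; [eapply Hup; eauto|].
      intro; subst e'. apply h2, wmin; auto; apply ltc_lhd; auto. }
    assert (IHc := IH _ M P V' hl' HV' HMP neP (fun e h => HVA e (proj1 h)) Hup').
    set (N' := Nset P V' k) in *.
    set (K' := setU (skel_pred M k) N') in *.
    set (L' := setU (skel_pred P k) N') in *.
    assert (dN' : forall z, N' z -> dim z = k).
    { intros z [[h|[e [h1 h2]]] _]; [apply h|]. apply gm in h2. destruct (HVA e (proj1 h1)) as [_ h3]. lia. }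
    assert (nc : ncell k K' L').
    { split; auto. intros y [[[h1 h2]|h]|[[h1 h2]|h]]; try lia; apply dN' in h; lia. }
    assert (wA := cf_wfA M P k HMP).
    assert (pw : subset (xp w) (layer K' k)).
    { intros z hz. assert (dz : dim z = k) by (apply gp in hz; destruct Aw as [_ h]; lia).
      split; auto. right. split.
      - destruct (classic (Sminus (layer M (S k)) z)) as [[e [he1 he2]]|hn].
        + right. exists e; split; auto. split.
          * eapply Hup; eauto. exists z; auto.
          * intro; subst e. eapply dj; eauto.
        + left. apply (cf_E2 M P k HMP z dz). split; auto. right. exists w; auto.
      - intros [e [[he1 he2] he3]].
        destruct (HVA e he1) as [a1 a2]. destruct Aw as [a3 a4].
        apply (wf_pp _ e w z wA (HVA e he1) (conj a3 a4)); auto; lia. }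
    destruct (HS K' L' w nc) as [_ hc]; [destruct Aw as [_ h]; rewrite h; auto|exact pw|].
    assert (e1 : forall z, Sminus V z <-> Sminus V' z \/ minus w z).
    { intro z; split.
      - intros [e [h1 h2]]; destruct (eqd e w); [subst; auto|left; exists e; split; auto; split; auto].
      - intros [[e [[h1 _] h2]]|h]; [exists e|exists w]; auto. }
    assert (e2 : forall z, Splus V z <-> Splus V' z \/ plus w z).
    { intro z; split.
      - intros [e [h1 h2]]; destruct (eqd e w); [subst; auto|left; exists e; split; auto; split; auto].
      - intros [[e [[h1 _] h2]]|h]; [exists e|exists w]; auto. }
    assert (e3 : forall z, minus w z -> ~ Splus V' z).
    { intros z h [e [[h1 h2] h3]]. apply h2, wmin; auto. eapply lhd_lt; eauto. }
    assert (YN : forall z, Ydef K' k w z <-> Nset P V k z).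
    { intro z. assert (lk : layer K' k z <-> N' z).
      { split; [intros [[[_ h1]|h1] h2]; auto; lia|intro h; split; [right; auto|apply dN'; auto]]. }
      unfold Ydef, setD, setU. rewrite lk. unfold N', Nset, setD, setU.
      specialize (e1 z); specialize (e2 z); specialize (e3 z); unfold xm, xp; tauto. }
    revert hc; apply cell_ext; intro z; unfold setU; rewrite YN.
    + assert (skel_pred K' k z <-> skel_pred M k z); [|tauto].
      unfold skel_pred, K', setU; split; [intros [[h1|h1] h2]; auto; apply dN' in h1; lia|intros []; split; auto; left; split; auto].
    + assert (skel_pred L' k z <-> skel_pred P k z); [|tauto].
      unfold skel_pred, L', setU; split; [intros [[h1|h1] h2]; auto; apply dN' in h1; lia|intros []; split; auto; left; split; auto].
Qed.

Lemma S0 : Sstmt 0.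
Proof.
  intros M P x HMP dx hp.
  destruct HMP as [[c1 [c2 [wM [wP [fM [fP mv]]]]]] nd].
  destruct (nep x ltac:(lia)) as [p px].
  assert (Ap := hp p px).
  assert (u0 : forall u, M u -> dim u = 0 -> u = p).
  { intros u hu du. destruct Ap. apply (proj1 wM); auto. }
  assert (dmx : forall y, xm x y -> dim y = 0) by (intros y h; apply gm in h; lia).
  split.
  - intros y [h1 [h2 h3]]. assert (y = p) by (apply u0; auto). subst. eapply dj; eauto.
  - apply GL.
    + repeat (split; auto).
    + intros y [[[_ h]|h] _]; auto.
    + destruct (nem x ltac:(lia)) as [y hy]. exists y. split; [right; auto|intro h; eapply dj; eauto].
    + assert (DY : forall u, Ydef M 0 x u -> xm x u).
      { intros u [[[h1 h2]|h] h3]; auto. exfalso; apply h3. rewrite (u0 u h1 h2). auto. }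
      split.
      * intros u v hu hv _ _. apply DY in hu; apply DY in hv. apply (proj1 (wfm x)); auto.
      * intros n u v hn hu hv du. exfalso. apply DY in hu. apply dmx in hu. lia.
    + apply (finite_sub _ (setU (layer M 0) (xm x))); [apply finite_U; [apply (finite_sub _ _ fM); intros e []; auto|apply finm]|].
      intros e []; auto.
    + intros; lia.
    + intros; lia.
Qed.

Lemma SS : (forall M' P' : C -> Prop, cell M' P' -> receptive M' /\ receptive P') ->
  forall k, Sstmt k -> Sstmt (S k).
Proof.
  intros Hrec k HS M P x HMP dx hp.
  set (A := layer M (S k)) in *.
  assert (wA : well_formed A) by apply (cf_wfA M P k HMP).
  assert (E1 := cf_E1 M P k HMP). assert (E2 := cf_E2 M P k HMP). fold A in E1, E2.
  destruct (cf_finA M P k HMP) as [lA HlA]. fold A in HlA.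
  set (a := Sminus (xm x)). set (b := Splus (xm x)). set (c := Sminus (xp x)). set (d := Splus (xp x)).
  assert (dxm : forall u, xm x u -> dim u = S k) by (intros u h; apply gm in h; lia).
  assert (dxp : forall u, xp x u -> dim u = S k) by (intros u h; apply gp in h; lia).
  assert (da : forall z, a z -> dim z = k) by (intros z [u [h1 h2]]; apply gm in h2; apply dxm in h1; lia).
  assert (db : forall z, b z -> dim z = k) by (intros z [u [h1 h2]]; apply gp in h2; apply dxm in h1; lia).
  assert (dc : forall z, c z -> dim z = k) by (intros z [u [h1 h2]]; apply gm in h2; apply dxp in h1; lia).
  assert (dd : forall z, d z -> dim z = k) by (intros z [u [h1 h2]]; apply gp in h2; apply dxp in h1; lia).
  assert (F1a : forall z, a z -> d z -> False).
  { intros z [u [h1 h2]] [v [h3 h4]]. apply (a3B1 v u x); auto. eapply lhd_lt; eauto. }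
  assert (F1b : forall z, b z -> c z -> False).
  { intros z [u [h1 h2]] [v [h3 h4]]. apply (a3B2 u v x); auto. eapply lhd_lt; eauto. }
  assert (Ax : forall z, d z \/ a z <-> b z \/ c z) by (intro z; apply ax1).
  assert (neP : nonempty (layer P k)).
  { destruct (nep x ltac:(lia)) as [p px].
    destruct (lhd_max lA A (fun e h => HlA e h) (ex_intro _ p (hp p px))) as [m [Am mmax]].
    destruct (nep m ltac:(destruct Am; lia)) as [z pz].
    assert (dz : dim z = k) by (apply gp in pz; destruct Am; lia).
    exists z. apply (E2 z dz). split; [right; exists m; auto|].
    intros [e [Ae me]]. assert (e = m) by (apply mmax; auto; eapply lhd_lt; eauto). subst e.
    eapply dj; eauto. }
  assert (R2use : forall (V : C -> Prop) l, (forall e, V e <-> In e l) -> (forall e, V e -> A e) ->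
     (forall e e', V e -> A e' -> ltc e e' -> V e') -> (forall s, plus x s -> V s) ->
     (forall z, c z -> a z -> ~ Splus V z) ->
     forall z, b z -> (layer P k z \/ Sminus V z) -> Splus V z).
  { intros V l HV VA Vup Vx Vc z bz hz.
    assert (hc := CC k HS (length l) l M P V (le_n _) HV HMP neP VA Vup).
    destruct (Hrec _ _ hc) as [rc _].
    destruct (rc x) as [_ R2].
    destruct (classic (Splus V z)) as [h|h]; auto. exfalso.
    assert (H1 : subset (setI (Sminus (xp x)) (Sminus (xm x))) (setU (skel_pred M k) (Nset P V k))).
    { intros y [cy ay]. right. split.
      + right. destruct cy as [v [h1 h2]]. exists v; split; auto.
      + apply Vc; auto. }
    assert (H2 : forall y, ~ (setU (skel_pred M k) (Nset P V k) y /\ Splus (xp x) y)).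
    { intros y [[[_ hy]|[_ hy]] dy].
      + apply dd in dy; lia.
      + apply hy. destruct dy as [v [h1 h2]]. exists v; auto. }
    apply (R2 H1 H2 z). split; [right; split; auto|exact bz]. }
  assert (J_Pm : forall z, a z -> b z -> layer P k z -> False).
  { intros z az bz pz.
    destruct (finite_exact (fun e => A e /\ exists s, plus x s /\ lhd s e) lA) as [l Hl].
    { intros e [h _]; apply HlA; auto. }
    assert (side : forall z, a z -> ~ Splus (fun e => A e /\ exists s, plus x s /\ lhd s e) z).
    { intros z' [u [h1 h2]] [e [[_ [s [ps lse]]] pe]].
      apply (a3B1 s u x); auto. eapply lhd_trans; eauto. eapply lhd_lt; eauto. }
    apply (side z az). apply (R2use _ l Hl); auto.
    - intros e []; auto.
    - intros e e' [h1 [s [h2 h3]]] h4 h5. split; auto. exists s; split; auto.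
      eapply lhd_trans; eauto. apply ltc_lhd; auto.
    - intros s ps. split; [apply hp; auto|exists s; split; auto; apply lhd_refl]. }
  assert (J_Am : forall z, a z -> b z -> Sminus A z -> False).
  { intros z az bz [w [Aw mwz]].
    destruct bz as [u [xu uz]].
    destruct (finite_exact (fun e => A e /\ ((exists s, plus x s /\ lhd s e) \/ lhd w e)) lA) as [l Hl].
    { intros e [h _]; apply HlA; auto. }
    assert (luw : lhd u w) by (eapply lhd_lt; eauto).
    assert (sideA : forall z', a z' -> forall e s, plus x s -> lhd s e -> plus e z' -> False).
    { intros z' [u' [h1 h2]] e s ps lse pe.
      apply (a3B1 s u' x); auto. eapply lhd_trans; eauto. eapply lhd_lt; eauto. }
    assert (h := R2use _ l Hl).
    destruct h with (z := z) as [e [[Ae [[s [ps lse]]|lwe]] pez]].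
    - intros e []; auto.
    - intros e e' [h1 h2] h4 h5. split; auto. destruct h2 as [[s [h2 h3]]|h2]; [left; exists s|right];
      [split; auto|]; eapply lhd_trans; eauto; apply ltc_lhd; auto.
    - intros s ps. split; [apply hp; auto|left; exists s; split; auto; apply lhd_refl].
    - intros z' cz' az' [e [[Ae [[s [ps lse]]|lwe]] pez]].
      + eapply sideA; eauto.
      + destruct cz' as [v [xv vz]].
        apply (a3B2 u v x); auto. eapply lhd_trans; [exact luw|]. eapply lhd_trans; [exact lwe|].
        eapply lhd_lt; eauto.
    - exists u; auto.
    - right. exists w. split; auto. split; auto. right; apply lhd_refl.
    - eapply sideA; eauto.
    - assert (e = w) by (apply a3A; auto; eapply lhd_lt; eauto). subst e. eapply dj; eauto. }
  assert (J_Ap : forall z, a z -> b z -> Splus A z -> False).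
  { intros z az bz pz. destruct (classic (Sminus A z)) as [h|h]; [eapply J_Am; eauto|].
    apply (J_Pm z az bz). apply (E2 z (da z az)). tauto. }
  assert (J_Mm : forall z, a z -> b z -> layer M k z -> False).
  { intros z az bz mz. apply (E1 z (da z az)) in mz. destruct mz as [[h|h] _]; eauto. }
  assert (dA : forall u, A u -> dim u = S k) by (intros u []; auto).
  assert (mixm : forall u v z, A u -> ~ xp x u -> xm x v -> minus u z -> minus v z -> False).
  { intros u v z Au nu xv uz vz.
    assert (az : a z) by (exists v; auto).
    destruct (classic (b z)) as [bz|bz]; [apply (J_Am z az bz); exists u; auto|].
    assert (cz : c z) by (specialize (Ax z); tauto).
    destruct cz as [v' [xv' v'z]].
    apply (wf_mm A u v' z wA Au (hp v' xv')); auto.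
    - rewrite (dA u Au), (dA v' (hp v' xv')); auto.
    - rewrite (dA u Au); lia.
    - intro; subst; auto. }
  assert (mixp : forall u v z, A u -> ~ xp x u -> xm x v -> plus u z -> plus v z -> False).
  { intros u v z Au nu xv uz vz.
    assert (bz : b z) by (exists v; auto).
    destruct (classic (a z)) as [az|az]; [apply (J_Ap z az bz); exists u; auto|].
    assert (dz : d z) by (specialize (Ax z); tauto).
    destruct dz as [v' [xv' v'z]].
    apply (wf_pp A u v' z wA Au (hp v' xv')); auto.
    - rewrite (dA u Au), (dA v' (hp v' xv')); auto.
    - rewrite (dA u Au); lia.
    - intro; subst; auto. }
  split.
  - intros y [xy Ay].
    destruct (nem y ltac:(rewrite (dA y Ay); lia)) as [z yz].
    apply (mixm y y z Ay); auto. intro h; apply (dj x y); auto.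
  - assert (G : forall z, dim z = k ->
        (M z <-> (P z \/ Sminus (Ydef M (S k) x) z) /\ ~ Splus (Ydef M (S k) x) z) /\
        (P z <-> (M z \/ Splus (Ydef M (S k) x) z) /\ ~ Sminus (Ydef M (S k) x) z)).
      { intros z dz.
        set (Bm := exists y, A y /\ ~ xp x y /\ minus y z).
        set (Bp := exists y, A y /\ ~ xp x y /\ plus y z).
        assert (h1 : Sminus (Ydef M (S k) x) z <-> Bm \/ a z).
        { split.
          - intros [y [[[hy|hy] ny] yz]]; [left; exists y; auto|right; exists y; auto].
          - intros [[y [hy [ny yz]]]|[y [hy yz]]].
            + exists y; split; auto. split; auto. left; auto.
            + exists y; split; auto. split; [right; auto| intro h; apply (dj x y); auto]. }
        assert (h2 : Splus (Ydef M (S k) x) z <-> Bp \/ b z).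
        { split.
          - intros [y [[[hy|hy] ny] yz]]; [left; exists y; auto|right; exists y; auto].
          - intros [[y [hy [ny yz]]]|[y [hy yz]]].
            + exists y; split; auto. split; auto. left; auto.
            + exists y; split; auto. split; [right; auto| intro h; apply (dj x y); auto]. }
        assert (h3 : Sminus A z <-> Bm \/ c z).
        { split.
          - intros [y [hy yz]]. destruct (classic (xp x y)); [right; exists y; auto|left; exists y; auto].
          - intros [[y [hy [ny yz]]]|[y [hy yz]]]; exists y; split; auto. }
        assert (h4 : Splus A z <-> Bp \/ d z).
        { split.
          - intros [y [hy yz]]. destruct (classic (xp x y)); [right; exists y; auto|left; exists y; auto].
          - intros [[y [hy [ny yz]]]|[y [hy yz]]]; exists y; split; auto. }
        assert (W1 : Bm -> c z -> False).
        { intros [y [hy [ny yz]]] [v [xv vz]]. apply (wf_mm A y v z wA hy (hp v xv)); auto.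
          - rewrite (dA y hy), (dA v (hp v xv)); auto.
          - rewrite (dA y hy); lia.
          - intro; subst; auto. }
        assert (W2 : Bp -> d z -> False).
        { intros [y [hy [ny yz]]] [v [xv vz]]. apply (wf_pp A y v z wA hy (hp v xv)); auto.
          - rewrite (dA y hy), (dA v (hp v xv)); auto.
          - rewrite (dA y hy); lia.
          - intro; subst; auto. }
        assert (lM : layer M k z <-> M z) by (unfold layer; tauto).
        assert (lP : layer P k z <-> P z) by (unfold layer; tauto).
        specialize (E1 z dz); specialize (E2 z dz); specialize (Ax z); specialize (F1a z); specialize (F1b z);
        specialize (J_Pm z); specialize (J_Mm z).
        rewrite lM, lP, h3, h4 in *. rewrite h1, h2.
        clear -E1 E2 Ax F1a F1b J_Pm J_Mm W1 W2. tauto. }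
    apply GL.
    + apply HMP.
    + intros y [[[_ h]|h] _]; auto.
    + destruct (nem x ltac:(lia)) as [y hy]. exists y. split; [right; auto|intro h; eapply dj; eauto].
    + split.
      * intros u v [[hu|hu] _] _ du _; [rewrite (dA u hu) in du|rewrite (dxm u hu) in du]; discriminate.
      * intros n u v hn [[hu|hu] nu] [[hv|hv] nv] du dv ne; split; intros y [hy1 hy2].
        all: destruct hy1 as [u' [e1 h1]]; destruct hy2 as [v' [e2 h2]]; unfold set1 in e1, e2; subst u' v'.
        all: first [ apply (wf_mm A u v y wA hu hv); auto; lia
                   | apply (wf_pp A u v y wA hu hv); auto; lia
                   | apply (wf_mm (xm x) u v y (wfm x) hu hv); auto; lia
                   | apply (wf_pp (xm x) u v y (wfm x) hu hv); auto; lia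
                   | apply (mixm u v y hu nu hv h1 h2)
                   | apply (mixp u v y hu nu hv h1 h2)
                   | apply (mixm v u y hv nv hu h2 h1)
                   | apply (mixp v u y hv nv hu h2 h1) ].
    + destruct HMP as [[_ [_ [_ [_ [fM _]]]]] _].
      apply (finite_sub _ (setU A (xm x))); [apply finite_U; [apply (finite_sub _ _ fM); intros e []; auto|apply finm]|].
      intros e [h _]; auto.
    + intros z hz; apply G; auto.
    + intros z hz; apply G; auto.
Qed.

Lemma Sall : (forall M' P' : C -> Prop, cell M' P' -> receptive M' /\ receptive P') -> forall n, Sstmt n.
Proof. intros Hrec n; induction n; [apply S0|apply SS; auto]. Qed.

Lemma top_eq : forall n (M P : C -> Prop), ncell n M P -> forall z, dim z = n -> (M z <-> P z).
Proof.
  intros n M P [[_ [_ [_ [_ [_ [_ [[m1 m2] _]]]]]]] nd] z hz.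
  specialize (m1 z); unfold setD, setU in m1.
  assert (~ Sminus M z).
  { intros [w [hw hw']]. apply gm in hw'. assert (dim w <= n) by (apply nd; left; auto). lia. }
  assert (~ Splus M z).
  { intros [w [hw hw']]. apply gp in hw'. assert (dim w <= n) by (apply nd; left; auto). lia. }
  tauto.
Qed.

Definition Yset (M X : C -> Prop) n := setD (setU (layer M n) (Sminus X)) (Splus X).

Lemma mainB : (forall M' P' : C -> Prop, cell M' P' -> receptive M' /\ receptive P') ->
  forall n len (l : list C) (M P X : C -> Prop), length l <= len -> (forall x, X x <-> In x l) ->
  ncell n M P -> (forall x, X x -> dim x = S n) -> well_formed X -> subset (Spm X) (layer M n) ->
  cell (setU (skel_pred M n) (Yset M X n)) (setU (skel_pred P n) (Yset M X n)) /\
  (forall y, ~ (Sminus X y /\ layer M n y)).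
Proof.
  intros Hrec n len.
  assert (EMP : forall (M P X : C -> Prop), ncell n M P -> (forall e, ~ X e) ->
    cell (setU (skel_pred M n) (Yset M X n)) (setU (skel_pred P n) (Yset M X n)) /\
    (forall y, ~ (Sminus X y /\ layer M n y))).
  { intros M P X HMP nX.
    assert (n1 : forall z, ~ Sminus X z) by (intros z [w [h _]]; apply (nX w h)).
    assert (n2 : forall z, ~ Splus X z) by (intros z [w [h _]]; apply (nX w h)).
    split; [|intros y [h _]; apply (n1 y h)].
    assert (hc : cell M P) by apply HMP.
    assert (nd := proj2 HMP).
    revert hc; apply cell_ext; intro z; unfold Yset, setU, setD, skel_pred, layer;
      specialize (n1 z); specialize (n2 z).
    - split; [intros h; assert (dim z <= n) by (apply nd; left; auto);
        destruct (Nat.eq_dec (dim z) n); [right|left]; repeat split; auto; lia|tauto].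
    - assert (hh := top_eq n M P HMP z).
      split.
      + intros h. assert (dim z <= n) by (apply nd; right; auto).
        destruct (Nat.eq_dec (dim z) n); [right|left].
        * split; [left; split; auto; apply hh; auto|auto].
        * split; auto; lia.
      + intros [[h1 h2]|[[[h1 h2]|h1] h3]]; auto; [apply hh; auto|tauto]. }
  induction len as [|len IH]; intros l M P X hl HX HMP dX wX hpm.
  - apply EMP; auto. intros e h. apply HX in h. destruct l; simpl in *; auto; lia.
  - destruct (classic (exists e, X e)) as [ne|ne]; [|apply EMP; eauto].
    destruct (lhd_min l X (fun e h => proj1 (HX e) h) ne) as [x [Xx xmin]].
    set (X' := fun e => X e /\ e <> x).
    assert (HX' : forall e, X' e <-> In e (remove eqd x l)).
    { intros e; unfold X'; split.
      - intros [h1 h2]; apply in_in_remove; auto; apply HX; auto.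
      - intros h; apply in_remove in h; destruct h; split; auto; apply HX; auto. }
    assert (hl' : length (remove eqd x l) <= len).
    { assert (length (remove eqd x l) < length l) by (apply remove_length_lt, HX, Xx). lia. }
    assert (em : forall z, Sminus X z <-> Sminus X' z \/ minus x z).
    { intro z; split.
      - intros [e [h1 h2]]; destruct (eqd e x); [subst; auto|left; exists e; split; auto; split; auto].
      - intros [[e [[h1 _] h2]]|h]; [exists e|exists x]; auto. }
    assert (ep : forall z, Splus X z <-> Splus X' z \/ plus x z).
    { intro z; split.
      - intros [e [h1 h2]]; destruct (eqd e x); [subst; auto|left; exists e; split; auto; split; auto].
      - intros [[e [[h1 _] h2]]|h]; [exists e|exists x]; auto. }
    assert (mn : forall z, minus x z -> ~ Splus X' z).
    { intros z h [e [[h1 h2] h3]]. apply h2, xmin; auto. eapply lhd_lt; eauto. }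
    assert (wX' : well_formed X') by (apply (wf_sub _ _ (fun e h => proj1 h) wX)).
    assert (hpm' : subset (Spm X') (layer M n)).
    { intros z [h1 h2]. apply hpm. split.
      - destruct h1 as [e [[h1 _] h3]]; exists e; auto.
      - intro h. apply em in h as [h|h]; auto. destruct h1 as [e h1]. apply (mn z h). exists e; auto. }
    destruct (IH _ M P X' hl' HX' HMP (fun e h => dX e (proj1 h)) wX' hpm') as [hc' hd'].
    set (Y' := Yset M X' n) in *.
    set (K' := setU (skel_pred M n) Y') in *.
    set (L' := setU (skel_pred P n) Y') in *.
    assert (dY' : forall z, Y' z -> dim z = n).
    { intros z [[h|[e [h1 h2]]] _]; [apply h|]. apply gm in h2. rewrite (dX e (proj1 h1)) in h2. lia. }
    assert (nc : ncell n K' L').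
    { split; auto. intros y [[[h1 h2]|h]|[[h1 h2]|h]]; try lia; apply dY' in h; lia. }
    assert (dx : dim x = S n) by auto.
    assert (pw : subset (xp x) (layer K' n)).
    { intros z hz. assert (dz : dim z = n) by (apply gp in hz; lia).
      split; auto. right. split.
      - destruct (classic (Sminus X z)) as [[e [he1 he2]]|hn].
        + right. exists e; split; auto. split; auto.
          intro; subst e. eapply dj; eauto.
        + left. apply hpm. split; auto. exists x; auto.
      - intros [e [[he1 he2] he3]].
        apply (wf_pp X e x z wX he1 Xx); auto.
        + rewrite (dX e he1), dx; auto.
        + rewrite (dX e he1); lia. }
    destruct (Sall Hrec n K' L' x nc dx pw) as [hi hc].
    assert (YN : forall z, Ydef K' n x z <-> Yset M X n z).
    { intro z. assert (lk : layer K' n z <-> Y' z).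
      { split; [intros [[[_ h1]|h1] h2]; auto; lia|intro h; split; [right; auto|apply dY'; auto]]. }
      unfold Ydef, setD, setU. rewrite lk. unfold Y', Yset, setD, setU.
      specialize (em z); specialize (ep z); specialize (mn z); unfold xm, xp; tauto. }
    split.
    + revert hc; apply cell_ext; intro z; unfold setU; rewrite YN.
      * assert (skel_pred K' n z <-> skel_pred M n z); [|tauto].
        unfold skel_pred, K', setU; split; [intros [[h1|h1] h2]; auto; apply dY' in h1; lia|intros []; split; auto; left; split; auto].
      * assert (skel_pred L' n z <-> skel_pred P n z); [|tauto].
        unfold skel_pred, L', setU; split; [intros [[h1|h1] h2]; auto; apply dY' in h1; lia|intros []; split; auto; left; split; auto].
    + intros y [h1 h2]. apply em in h1 as [h1|h1]; [apply (hd' y); auto|].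
      apply (hi y). split; auto. split; [right|].
      * split; [left; auto|]. apply mn; auto.
      * destruct h2; auto.
Qed.

Lemma partC : forall n (M P X : C -> Prop), ncell n M P -> (forall x, X x -> dim x = S n) ->
  well_formed X -> finite X -> subset (Spm X) (layer M n) ->
  cell (setU (skel_pred M n) (Yset M X n)) (setU (skel_pred P n) (Yset M X n)) ->
  (forall y, ~ (Sminus X y /\ layer M n y)) ->
  cell (setU (setU (skel_pred M n) (Yset M X n)) X) (setU P X).
Proof.
  intros n M P X HMP dX wX fX hpm hc0 hdis.
  set (Y := Yset M X n) in *.
  assert (dY : forall z, Y z -> dim z = n).
  { intros z [[h|[e [h1 h2]]] _]; [apply h|]. apply gm in h2. rewrite (dX e h1) in h2. lia. }
  destruct HMP as [[c1 [c2 [wM [wP [fM [fP [[m1 m2] [p1 p2]]]]]]]] nd].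
  assert (dP : forall z, P z -> dim z <= n) by (intros z h; apply nd; right; auto).
  assert (dM : forall z, M z -> dim z <= n) by (intros z h; apply nd; left; auto).
  assert (top := top_eq n M P (conj (conj c1 (conj c2 (conj wM (conj wP (conj fM (conj fP (conj (conj m1 m2) (conj p1 p2)))))))) nd)).
  destruct hc0 as [k1 [k2 [wK0 [wL0 [fK0 [fL0 [[q1 q2] [r1 r2]]]]]]]].
  set (K0 := setU (skel_pred M n) Y) in *.
  set (L0 := setU (skel_pred P n) Y) in *.
  set (K := setU K0 X). set (L := setU P X).
  assert (dK0 : forall z, K0 z -> dim z <= n).
  { intros z [[_ h]|h]; [lia|apply dY in h; lia]. }
  unfold cell, moves.
  split; [destruct k1 as [y hy]; exists y; left; auto|].
  split; [destruct c2 as [y hy]; exists y; left; auto|].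
  split.
  { destruct wK0 as [a1 a2]; destruct wX as [b1 b2]; split.
    - intros u v [hu|hu] [hv|hv] du dv; auto; exfalso; first [apply dX in hv; lia | apply dX in hu; lia].
    - intros k u v hk [hu|hu] [hv|hv] du dv ne; eauto; exfalso;
      first [ apply dK0 in hu; apply dX in hv; lia | apply dX in hu; apply dK0 in hv; lia]. }
  split.
  { destruct wP as [a1 a2]; destruct wX as [b1 b2]; split.
    - intros u v [hu|hu] [hv|hv] du dv; auto; exfalso; first [apply dX in hv; lia | apply dX in hu; lia].
    - intros k u v hk [hu|hu] [hv|hv] du dv ne; eauto; exfalso;
      first [ apply dP in hu; apply dX in hv; lia | apply dX in hu; apply dP in hv; lia]. }
  split; [apply finite_U; auto|].
  split; [apply finite_U; auto|].
  assert (G : forall z,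
    (K z <-> (L z \/ Sminus K z) /\ ~ Splus K z) /\ (L z <-> (K z \/ Splus K z) /\ ~ Sminus K z) /\
    (K z <-> (L z \/ Sminus L z) /\ ~ Splus L z) /\ (L z <-> (K z \/ Splus L z) /\ ~ Sminus L z)).
  { intro z.
    assert (Kw : forall w, dim w < n -> (K w <-> M w)).
    { intros w hw; unfold K, K0, setU, skel_pred; split.
      - intros [[[h _]|h]|h]; auto; [apply dY in h|apply dX in h]; lia.
      - intros h; left; left; auto. }
    assert (Lw : forall w, dim w < S n -> (L w <-> P w)).
    { intros w hw; unfold L, setU; split; [intros [h|h]; auto; apply dX in h; lia|auto]. }
    assert (Kn : forall w, dim w = n -> (K w <-> Y w)).
    { intros w hw; unfold K, K0, setU, skel_pred; split.
      - intros [[[_ h]|h]|h]; auto; [lia|apply dX in h; lia].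
      - auto. }
    assert (Ksn : forall w, dim w = S n -> (K w <-> X w)).
    { intros w hw; unfold K, K0, setU, skel_pred; split.
      - intros [[[_ h]|h]|h]; auto; [lia|apply dY in h; lia].
      - auto. }
    assert (Lsn : forall w, dim w = S n -> (L w <-> X w)).
    { intros w hw; unfold L, setU; split; [intros [h|h]; auto; apply dP in h; lia|auto]. }
    assert (Kbig : forall w, dim w > S n -> ~ K w).
    { intros w hw; unfold K, K0, setU, skel_pred; intros [[[_ h]|h]|h]; [lia|apply dY in h|apply dX in h]; lia. }
    assert (Lbig : forall w, dim w > S n -> ~ L w).
    { intros w hw; unfold L, setU; intros [h|h]; [apply dP in h|apply dX in h]; lia. }
    destruct (lt_eq_lt_dec (S (dim z)) n) as [[h|h]|h].
    - assert (a1 : K z <-> M z) by (apply Kw; lia).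
      assert (a2 : L z <-> P z) by (apply Lw; lia).
      assert (a3 : Sminus K z <-> Sminus M z) by (apply Sminus_ext; intros w hw; apply Kw; lia).
      assert (a4 : Splus K z <-> Splus M z) by (apply Splus_ext; intros w hw; apply Kw; lia).
      assert (a5 : Sminus L z <-> Sminus P z) by (apply Sminus_ext; intros w hw; apply Lw; lia).
      assert (a6 : Splus L z <-> Splus P z) by (apply Splus_ext; intros w hw; apply Lw; lia).
      specialize (m1 z); specialize (m2 z); specialize (p1 z); specialize (p2 z); unfold setD, setU in *; tauto.
    - assert (a1 : K z <-> M z) by (apply Kw; lia).
      assert (a2 : L z <-> P z) by (apply Lw; lia).
      assert (a3 : Sminus K z <-> Sminus Y z) by (apply Sminus_ext; intros w hw; apply Kn; lia).
      assert (a4 : Splus K z <-> Splus Y z) by (apply Splus_ext; intros w hw; apply Kn; lia).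
      assert (a5 : Sminus L z <-> Sminus P z) by (apply Sminus_ext; intros w hw; apply Lw; lia).
      assert (a6 : Splus L z <-> Splus P z) by (apply Splus_ext; intros w hw; apply Lw; lia).
      assert (b1 : K0 z <-> M z) by (apply K_lt; auto; lia).
      assert (b2 : L0 z <-> P z) by (apply K_lt; auto; lia).
      assert (b3 : Sminus K0 z <-> Sminus Y z) by (apply Sminus_ext; intros w hw; apply K_eq; lia).
      assert (b4 : Splus K0 z <-> Splus Y z) by (apply Splus_ext; intros w hw; apply K_eq; lia).
      specialize (q1 z); specialize (q2 z); specialize (p1 z); specialize (p2 z); unfold setD, setU in *; tauto.
    - destruct (Nat.eq_dec (dim z) n) as [e|e].
      + assert (a1 : K z <-> Y z) by (apply Kn; auto).
        assert (a2 : L z <-> layer M n z) by (unfold layer; rewrite Lw; [rewrite <- top; auto; tauto|lia]).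
        assert (c3 : Sminus K z <-> Sminus X z) by (apply Sminus_ext; intros w hw; apply Ksn; lia).
        assert (c4 : Splus K z <-> Splus X z) by (apply Splus_ext; intros w hw; apply Ksn; lia).
        assert (c5 : Sminus L z <-> Sminus X z) by (apply Sminus_ext; intros w hw; apply Lsn; lia).
        assert (c6 : Splus L z <-> Splus X z) by (apply Splus_ext; intros w hw; apply Lsn; lia).
        assert (y1 : Y z <-> (layer M n z \/ Sminus X z) /\ ~ Splus X z) by (unfold Y, Yset, setD, setU; tauto).
        assert (y2 : layer M n z <-> (Y z \/ Splus X z) /\ ~ Sminus X z).
        { specialize (hdis z). specialize (hpm z). unfold Spm, setD in hpm.
          rewrite y1. tauto. }
        tauto.
      + assert (a3 : ~ Sminus K z) by (intros [w [hw hw']]; apply gm in hw'; apply (Kbig w); auto; lia).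
        assert (a4 : ~ Splus K z) by (intros [w [hw hw']]; apply gp in hw'; apply (Kbig w); auto; lia).
        assert (a5 : ~ Sminus L z) by (intros [w [hw hw']]; apply gm in hw'; apply (Lbig w); auto; lia).
        assert (a6 : ~ Splus L z) by (intros [w [hw hw']]; apply gp in hw'; apply (Lbig w); auto; lia).
        destruct (Nat.eq_dec (dim z) (S n)) as [e'|e'].
        * assert (a1 : K z <-> X z) by (apply Ksn; auto).
          assert (a2 : L z <-> X z) by (apply Lsn; auto).
          tauto.
        * assert (a1 : ~ K z) by (apply Kbig; lia).
          assert (a2 : ~ L z) by (apply Lbig; lia).
          tauto. }
  split; split; intro z; unfold setD, setU; apply G.
Qed.

End PC.

Theorem lemma3p2 (C : ParityComplex)
  (Hrec : forall M' P' : C -> Prop, cell M' P' -> receptive M' /\ receptive P')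
  (m n : nat) (M P X : C -> Prop)
  (HMP : ncell n M P)
  (HXdim : forall x, X x -> dim x = S n)
  (HXwf : well_formed X)
  (HXcard : has_card X m)
  (HXpm : subset (Spm X) (layer M n)) :
  let Y := setD (setU (layer M n) (Sminus X)) (Splus X) in
  (cell (setU (skel_pred M n) Y) (setU (skel_pred P n) Y) /\
   (forall y, ~ (Sminus X y /\ layer M n y))) /\
  cell (setU (setU (skel_pred M n) Y) X) (setU P X).
Proof.
  intros Y.
  destruct HXcard as [l [_ [_ Hl]]].
  destruct (mainB C Hrec n (length l) l M P X (le_n _) Hl HMP HXdim HXwf HXpm) as [hb hd].
  split; [split; auto|].
  apply (partC C n M P X HMP HXdim HXwf); auto.
  exists l; intros x hx; apply Hl; auto.
Qed.
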